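(* Let $G$ be a $\lambda$-graph and $Q$ a query over $G$. Then $Q^{\Downarrow}$ is a bisimulation if and only if $Q^{\#}$ is a bisimulation.
   Context: A pre-$\lambda$-graph is a directed graph whose nodes are of four kinds: an application node $@(n_1,n_2)$ has exactly two children, its left child $n_1$ and its right child $n_2$; an abstraction node $\lambda(n)$ has exactly one child, its body $n$; a free variable node has no children and carries an atom $\mathrm{id}(n)$ from a fixed set of atoms, distinct free variable nodes carrying distinct atoms; a bound variable node $\mathrm{var}(l)$ has exactly one outgoing binding edge, to an abstraction node $l$ (its binder). A trace is a finite sequence of directions from $\{\swarrow,\downarrow,\searrow\}$; $\epsilon$ is the empty trace and $d\cdot\tau$ is the trace $\tau$ extended by one final step $d$. Paths $n\xrightarrow{\tau}m$ are defined inductively: $n\xrightarrow{\epsilon}n$; if $n\xrightarrow{\tau}\lambda(m)$ then $n\xrightarrow{\downarrow\cdot\tau}m$; if $n\xrightarrow{\tau}@(m_1,m_2)$ then $n\xrightarrow{\swarrow\cdot\tau}m_1$ and $n\xrightarrow{\searrow\cdot\tau}m_2$ (binding edges are never followed). The path $n\xrightarrow{\tau}$ crosses a node $m$ if either $n\xrightarrow{\tau}m$, or $\tau=d\cdot\tau'$ and $n\xrightarrow{\tau'}$ crosses $m$. A root is a node $r$ such that the only path ending in $r$ has the empty trace. A node $m$ dominates $n$ if every path from a root to $n$ crosses $m$. A $\lambda$-graph is a pre-$\lambda$-graph that has finitely many nodes, is acyclic ($n\xrightarrow{\tau}n$ holds only for $\tau=\epsilon$), and is dominated (every bound variable node $\mathrm{var}(l)$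 is dominated by its binder $l$). Two nodes are homogeneous if both are application nodes, or both abstraction nodes, or both free variable nodes, or both bound variable nodes; a binary relation $R$ on nodes is homogeneous if it only relates homogeneous nodes. Rules: $(\swarrow)$: $@(n_1,n_2)\,R\,@(m_1,m_2)$ implies $n_1\,R\,m_1$; $(\searrow)$: $@(n_1,n_2)\,R\,@(m_1,m_2)$ implies $n_2\,R\,m_2$; $(\downarrow)$: $\lambda(n)\,R\,\lambda(m)$ implies $n\,R\,m$; $(\circlearrowright)$: $\mathrm{var}(n)\,R\,\mathrm{var}(m)$ implies $n\,R\,m$. $R$ is propagated if closed under $(\swarrow),(\downarrow),(\searrow)$. A bisimulation is a homogeneous propagated relation closed also under $(\circlearrowright)$. $R^{\Downarrow}$ (propagation) is the smallest propagated relation containing $R$; $R^{\#}$ (spreading) is the smallest propagated equivalence relation containing $R$. A query over $G$ is a binary relation on the roots of $G$. *)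

(* Defs.v *)
From mathcomp Require Import all_boot.
Set Implicit Arguments. Unset Strict Implicit. Unset Printing Implicit Defensive.

Inductive node (V A : Type) : Type :=
  | App  of V & V
  | Abs  of V
  | Fvar of A
  | Bvar of V.        (* bound variable var(l), binding edge to l *)

Arguments App {V A}. Arguments Abs {V A}. Arguments Fvar {V A}. Arguments Bvar {V A}.

Inductive dir := SW | DOWN | SE.
(* A trace; the head of the list is the LAST step: d :: tau  is  d . tau *)
Definition trace := list dir.

Section Graph.
Variables (V A : Type) (lab : V -> node V A).

Definition pre_lambda_graph : Prop :=
  (forall v l, lab v = Bvar l -> exists b, lab l = Abs b) /\
  (forall v w a, lab v = Fvar a -> lab w = Fvar a -> v = w).

Inductive path (n : V) : trace -> V -> Prop :=
  | path_nil : path n nil n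
  | path_down tau m b : path n tau m -> lab m = Abs b -> path n (DOWN :: tau) b
  | path_sw tau m m1 m2 : path n tau m -> lab m = App m1 m2 -> path n (SW :: tau) m1
  | path_se tau m m1 m2 : path n tau m -> lab m = App m1 m2 -> path n (SE :: tau) m2.

Fixpoint crosses (n : V) (tau : trace) (m : V) : Prop :=
  path n tau m \/ match tau with nil => False | _ :: tau' => crosses n tau' m end.

Definition root (r : V) : Prop := forall n tau, path n tau r -> tau = nil.

Definition dominates (m n : V) : Prop :=
  forall r tau, root r -> path r tau n -> crosses r tau m.

Definition acyclic : Prop := forall n tau, path n tau n -> tau = nil.

Definition dominated : Prop := forall v l, lab v = Bvar l -> dominates l v.

(* Finiteness is provided by V being a finType in the statement. *)
Definition lambda_graph : Prop := pre_lambda_graph /\ acyclic /\ dominated.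

Definition homogeneous_nodes (n m : V) : Prop :=
  match lab n, lab m with
  | App _ _, App _ _ | Abs _, Abs _ | Fvar _, Fvar _ | Bvar _, Bvar _ => True
  | _, _ => False
  end.

Definition homogeneous (R : V -> V -> Prop) : Prop :=
  forall n m, R n m -> homogeneous_nodes n m.

Definition propagated (R : V -> V -> Prop) : Prop :=
  (forall n m n1 n2 m1 m2, R n m -> lab n = App n1 n2 -> lab m = App m1 m2 -> R n1 m1) /\
  (forall n m n1 n2 m1 m2, R n m -> lab n = App n1 n2 -> lab m = App m1 m2 -> R n2 m2) /\
  (forall n m n' m', R n m -> lab n = Abs n' -> lab m = Abs m' -> R n' m').

Definition var_closed (R : V -> V -> Prop) : Prop :=
  forall n m l l', R n m -> lab n = Bvar l -> lab m = Bvar l' -> R l l'.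

Definition bisimulation (R : V -> V -> Prop) : Prop :=
  homogeneous R /\ propagated R /\ var_closed R.

(* R^{Downarrow}: smallest propagated relation containing R *)
Inductive propagation (R : V -> V -> Prop) : V -> V -> Prop :=
  | pr_base n m : R n m -> propagation R n m
  | pr_sw n m n1 n2 m1 m2 : propagation R n m -> lab n = App n1 n2 -> lab m = App m1 m2 ->
      propagation R n1 m1
  | pr_se n m n1 n2 m1 m2 : propagation R n m -> lab n = App n1 n2 -> lab m = App m1 m2 ->
      propagation R n2 m2
  | pr_down n m n' m' : propagation R n m -> lab n = Abs n' -> lab m = Abs m' ->
      propagation R n' m'.

(* R^#: smallest propagated equivalence relation containing R *)
Inductive spreading (R : V -> V -> Prop) : V -> V -> Prop :=
  | sp_base n m : R n m -> spreading R n m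
  | sp_refl n : spreading R n n
  | sp_sym n m : spreading R n m -> spreading R m n
  | sp_trans n m k : spreading R n m -> spreading R m k -> spreading R n k
  | sp_sw n m n1 n2 m1 m2 : spreading R n m -> lab n = App n1 n2 -> lab m = App m1 m2 ->
      spreading R n1 m1
  | sp_se n m n1 n2 m1 m2 : spreading R n m -> lab n = App n1 n2 -> lab m = App m1 m2 ->
      spreading R n2 m2
  | sp_down n m n' m' : spreading R n m -> lab n = Abs n' -> lab m = Abs m' ->
      spreading R n' m'.

Definition query (Q : V -> V -> Prop) : Prop :=
  forall n m, Q n m -> root n /\ root m.

End Graph.

(* Main.v *)
Require Import Defs.
From mathcomp Require Import all_boot.
From Stdlib Require Import Classical ClassicalDescription.
Set Implicit Arguments. Unset Strict Implicit.

Section S.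
Variables (V : finType) (A : Type) (lab : V -> node V A).

Lemma path_cat n tau m sigma k : Defs.path lab n tau m -> Defs.path lab m sigma k ->
  Defs.path lab n (sigma ++ tau) k.
Proof.
move=> H1 H2; induction H2 as [|s m' b _ IH Hl|s m' m1 m2 _ IH Hl|s m' m1 m2 _ IH Hl].
- exact H1.
- exact: Defs.path_down IH Hl.
- exact: Defs.path_sw IH Hl.
- exact: Defs.path_se IH Hl.
Qed.

Lemma path_split n alpha tau m : Defs.path lab n (alpha ++ tau) m ->
  exists x, Defs.path lab n tau x /\ Defs.path lab x alpha m.
Proof.
elim: alpha m => [|d al IH] m /= H.
- exists m; split => //; exact: Defs.path_nil.
- inversion H; subst.
  + have [x [H1' H2']] := IH _ H2. exists x; split => //; exact: Defs.path_down H2' H4.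
  + have [x [H1 H2']] := IH _ H2. exists x; split => //; exact: Defs.path_sw H2' H4.
  + have [x [H1 H2']] := IH _ H2. exists x; split => //; exact: Defs.path_se H2' H4.
Qed.

Lemma path_det n tau x : Defs.path lab n tau x -> forall y, Defs.path lab n tau y -> x = y.
Proof.
induction 1 as [|s m b _ IH Hl|s m m1 m2 _ IH Hl|s m m1 m2 _ IH Hl] => y Hy;
  inversion Hy; subst => //.
all: match goal with H : Defs.path lab _ _ ?z |- _ => have E := IH _ H end; subst; congruence.
Qed.

Lemma crosses_split n tau m : crosses lab n tau m ->
  exists alpha tau1, tau = alpha ++ tau1 /\ Defs.path lab n tau1 m.
Proof.
elim: tau => [|d t IH] /= [H|H] //.
- by exists [::], [::].
- by exists [::], (d :: t).
- have [al [t1 [E P]]] := IH H. exists (d :: al), t1; split => //. by rewrite E.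
Qed.

Lemma suffix_cmp (alpha beta t1 t2 : trace) : alpha ++ t1 = beta ++ t2 ->
  (exists g, t1 = g ++ t2) \/ (exists g, t2 = g ++ t1).
Proof.
elim: alpha beta => [|a al IH] [|b be] /= E.
- by left; exists [::].
- by left; exists (b :: be).
- by right; exists (a :: al).
- case: E => _ E. exact: IH E.
Qed.

Lemma prop_char Q n m : propagation lab Q n m ->
  exists r r' tau, Q r r' /\ Defs.path lab r tau n /\ Defs.path lab r' tau m.
Proof.
induction 1 as [n m H|n m n1 n2 m1 m2 _ [r [r' [t [HQ [P1 P2]]]]] H1 H2
  |n m n1 n2 m1 m2 _ [r [r' [t [HQ [P1 P2]]]]] H1 H2
  |n m n' m' _ [r [r' [t [HQ [P1 P2]]]]] H1 H2].
- exists n, m, [::]; split => //; split; exact: Defs.path_nil.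
- exists r, r', (SW :: t); split => //; split; [exact: Defs.path_sw P1 H1|exact: Defs.path_sw P2 H2].
- exists r, r', (SE :: t); split => //; split; [exact: Defs.path_se P1 H1|exact: Defs.path_se P2 H2].
- exists r, r', (DOWN :: t); split => //; split; [exact: Defs.path_down P1 H1|exact: Defs.path_down P2 H2].
Qed.

Lemma prop_of_paths Q r r' tau x : Q r r' -> Defs.path lab r tau x ->
  forall x', Defs.path lab r' tau x' -> propagation lab Q x x'.
Proof.
move=> HQ; induction 1 as [|s m b _ IH Hl|s m m1 m2 _ IH Hl|s m m1 m2 _ IH Hl] => x' Hx;
  inversion Hx; subst.
- exact: pr_base.
all: match goal with H : Defs.path lab _ _ ?z, H' : lab ?z = _ |- _ => have E := IH _ H end.
- exact: pr_down E Hl ltac:(eassumption).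
- exact: pr_sw E Hl ltac:(eassumption).
- exact: pr_se E Hl ltac:(eassumption).
Qed.

Lemma walk R : homogeneous lab R -> propagated lab R -> forall x x' s y,
  R x x' -> Defs.path lab x s y -> exists y', Defs.path lab x' s y' /\ R y y'.
Proof.
move=> Hh [Hsw [Hse Hd]] x x' s y HR; induction 1 as
  [|s m b _ IH Hl|s m m1 m2 _ IH Hl|s m m1 m2 _ IH Hl].
- exists x'; split => //; exact: Defs.path_nil.
- have [y' [P R']] := IH. have := Hh _ _ R'. rewrite /homogeneous_nodes Hl.
  case E: (lab y') => // [b'] _. exists b'; split; [exact: Defs.path_down P E|exact: Hd R' Hl E].
- have [y' [P R']] := IH. have := Hh _ _ R'. rewrite /homogeneous_nodes Hl.
  case E: (lab y') => // [c d] _. exists c; split; [exact: Defs.path_sw P E|exact: Hsw R' Hl E].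
- have [y' [P R']] := IH. have := Hh _ _ R'. rewrite /homogeneous_nodes Hl.
  case E: (lab y') => // [c d] _. exists d; split; [exact: Defs.path_se P E|exact: Hse R' Hl E].
Qed.

Definition pb (P : Prop) : bool := if excluded_middle_informative P then true else false.
Lemma pbP P : pb P = true <-> P.
Proof. rewrite /pb; case: excluded_middle_informative => //. Qed.

Definition desc x : {set V} := [set z | pb (exists s, s <> [::] /\ Defs.path lab x s z)].

Lemma desc_lt x s y : acyclic lab -> Defs.path lab x s y -> s <> [::] -> #|desc y| < #|desc x|.
Proof.
move=> Hac P ne; apply: proper_card; apply/properP; split.
- apply/subsetP => z; rewrite !inE => /pbP [s' [ne' P']]; apply/pbP.
  exists (s' ++ s); split; last exact: path_cat P P'.
  by case: s' ne' {P'}.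
- exists y; rewrite !inE.
  + by apply/pbP; exists s.
  + apply/negP => /pbP [s' [ne' P']]. exact: ne' (Hac _ _ P').
Qed.

Lemma no_descent R : acyclic lab -> homogeneous lab R -> propagated lab R ->
  forall x y s, R x y -> Defs.path lab x s y -> s <> [::] -> False.
Proof.
move=> Hac Hh Hp x y s HR P ne.
suff: forall k x y, #|desc x| <= k -> R x y -> Defs.path lab x s y -> False by apply; eauto.
elim => [|k IH] x0 y0 Hk HR0 P0.
- have := desc_lt Hac P0 ne. by rewrite ltnNge (leq_trans Hk).
- have [y' [P' R']] := walk Hh Hp HR0 P0.
  apply: (IH y0 y') => //. have := desc_lt Hac P0 ne. move=> H. by rewrite -ltnS (leq_trans H).
Qed.

Inductive eqc (R : V -> V -> Prop) : V -> V -> Prop :=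
 | eqc_base n m : R n m -> eqc R n m
 | eqc_refl n : eqc R n n
 | eqc_sym n m : eqc R n m -> eqc R m n
 | eqc_trans n m k : eqc R n m -> eqc R m k -> eqc R n k.

Lemma eqc_hom R : homogeneous lab R -> homogeneous lab (eqc R).
Proof.
move=> Hh n m; induction 1.
- exact: Hh.
- rewrite /homogeneous_nodes; by case: (lab n).
- move: IHeqc; rewrite /homogeneous_nodes; by case: (lab n); case: (lab m).
- move: IHeqc1 IHeqc2; rewrite /homogeneous_nodes; by case: (lab n); case: (lab m); case: (lab k).
Qed.

Lemma eqc_app R : homogeneous lab R -> propagated lab R -> forall n m, eqc R n m ->
  forall n1 n2 m1 m2, lab n = App n1 n2 -> lab m = App m1 m2 -> eqc R n1 m1 /\ eqc R n2 m2.
Proof.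
move=> Hh [Hsw [Hse Hd]]; induction 1 => n1 n2 m1 m2 E1 E2.
- split; apply: eqc_base; [exact: Hsw H E1 E2|exact: Hse H E1 E2].
- rewrite E1 in E2; case: E2 => -> ->; split; exact: eqc_refl.
- have [? ?] := IHeqc _ _ _ _ E2 E1; split; exact: eqc_sym.
- have := eqc_hom Hh H. rewrite /homogeneous_nodes E1.
  case E: (lab m) => // [c d] _.
  have [X1 X2] := IHeqc1 _ _ _ _ E1 E. have [Y1 Y2] := IHeqc2 _ _ _ _ E E2.
  split; [exact: eqc_trans X1 Y1|exact: eqc_trans X2 Y2].
Qed.

Lemma eqc_abs R : homogeneous lab R -> propagated lab R -> forall n m, eqc R n m ->
  forall n1 m1, lab n = Abs n1 -> lab m = Abs m1 -> eqc R n1 m1.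
Proof.
move=> Hh [Hsw [Hse Hd]]; induction 1 => n1 m1 E1 E2.
- apply: eqc_base; exact: Hd H E1 E2.
- rewrite E1 in E2; case: E2 => ->; exact: eqc_refl.
- exact: eqc_sym (IHeqc _ _ E2 E1).
- have := eqc_hom Hh H. rewrite /homogeneous_nodes E1.
  case E: (lab m) => // [c] _.
  exact: eqc_trans (IHeqc1 _ _ E1 E) (IHeqc2 _ _ E E2).
Qed.

Lemma eqc_var R : homogeneous lab R -> var_closed lab R -> forall n m, eqc R n m ->
  forall n1 m1, lab n = Bvar n1 -> lab m = Bvar m1 -> eqc R n1 m1.
Proof.
move=> Hh Hv; induction 1 => n1 m1 E1 E2.
- apply: eqc_base; exact: Hv H E1 E2.
- rewrite E1 in E2; case: E2 => ->; exact: eqc_refl.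
- exact: eqc_sym (IHeqc _ _ E2 E1).
- have := eqc_hom Hh H. rewrite /homogeneous_nodes E1.
  case E: (lab m) => // [c] _.
  exact: eqc_trans (IHeqc1 _ _ E1 E) (IHeqc2 _ _ E E2).
Qed.

Lemma prop_sub_sp Q n m : propagation lab Q n m -> spreading lab Q n m.
Proof.
induction 1.
- exact: sp_base.
- exact: sp_sw IHpropagation H0 H1.
- exact: sp_se IHpropagation H0 H1.
- exact: sp_down IHpropagation H0 H1.
Qed.

Lemma eqc_sub_sp Q n m : eqc (propagation lab Q) n m -> spreading lab Q n m.
Proof.
induction 1.
- exact: prop_sub_sp.
- exact: sp_refl.
- exact: sp_sym.
- exact: sp_trans IHeqc1 IHeqc2.
Qed.

End S.
Arguments eqc {V}.

Theorem mainTheorem13 (V : finType) (A : Type) (lab : V -> node V A)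
  (Q : V -> V -> Prop) :
  lambda_graph lab -> query lab Q ->
  (bisimulation lab (propagation lab Q) <-> bisimulation lab (spreading lab Q)).
Proof.
move=> [Hpre [Hac Hdom]] HQ; split.
- move=> [Hh [Hp Hv]].
  have Hp' : propagated lab (propagation lab Q).
    split; [|split]; [exact: pr_sw|exact: pr_se|exact: pr_down].
  have sub : forall n m, spreading lab Q n m -> eqc (propagation lab Q) n m.
    move=> n m; induction 1.
    + apply: eqc_base; exact: pr_base.
    + exact: eqc_refl.
    + exact: eqc_sym.
    + exact: eqc_trans IHspreading1 IHspreading2.
    + exact: (eqc_app Hh Hp' IHspreading H0 H1).1.
    + exact: (eqc_app Hh Hp' IHspreading H0 H1).2.
    + exact: (eqc_abs Hh Hp' IHspreading H0 H1).
  split; [|split].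
  + move=> n m H; exact: eqc_hom Hh _ _ (sub _ _ H).
  + split; [|split]; [exact: sp_sw|exact: sp_se|exact: sp_down].
  + move=> n m l l' H E1 E2. apply: eqc_sub_sp. exact: eqc_var Hh Hv _ _ (sub _ _ H) _ _ E1 E2.
- move=> [Hh [Hp Hv]]; split; [|split].
  + move=> n m H; have := Hh _ _ (prop_sub_sp H); exact.
  + split; [|split]; [exact: pr_sw|exact: pr_se|exact: pr_down].
  + move=> n m l l' H E1 E2.
    have Hsp : spreading lab Q l l' := Hv _ _ _ _ (prop_sub_sp H) E1 E2.
    have [r [r' [t [Hq [P1 P2]]]]] := prop_char H.
    have [Rr Rr'] := HQ _ _ Hq.
    have [al [t1 [Et1 Q1]]] := crosses_split (Hdom _ _ E1 _ _ Rr P1).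
    have [be [t2 [Et2 Q2]]] := crosses_split (Hdom _ _ E2 _ _ Rr' P2).
    have := suffix_cmp (etrans (esym Et1) Et2).
    case=> [[g Eg]|[g Eg]].
    *
      subst t1.
      have [x [Px Pxl]] := path_split Q1.
      have Hxl' := prop_of_paths Hq Px Q2.
      case: g Pxl Et1 Q1 => [|d g] Pxl _ _.
      - inversion Pxl; subst; exact Hxl'.
      - exfalso. apply: (no_descent Hac Hh Hp (x := x) (y := l) (s := d :: g)) => //.
        exact: sp_trans (prop_sub_sp Hxl') (sp_sym Hsp).
    * subst t2. 
      have [x [Px Pxl]] := path_split Q2.
      have Hlx := prop_of_paths Hq Q1 Px.
      case: g Pxl Et2 Q2 => [|d g] Pxl _ _.
      - inversion Pxl; subst; exact Hlx.
      - exfalso. apply: (no_descent Hac Hh Hp (x := x) (y := l') (s := d :: g)) => //.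
        exact: sp_trans (sp_sym (prop_sub_sp Hlx)) Hsp.
Qed.
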